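(* Let $(L,\preceq)$ be a lattice with meet $\wedge$ and join $\vee$, and let $\delta$ be an equivalence relation on $L$. Then $\delta$ is a local congruence on $L$ if and only if, for all $a,b,c\in L$, the following two properties hold: (i) if $(a,b)\in\delta$ and $a\preceq c\preceq b$, then $(a,c)\in\delta$; (ii) $(a,b)\in\delta$ if and only if $(a\wedge b,\,a\vee b)\in\delta$.
   Context: For an equivalence relation $\delta$ on a set $L$, $[a]_\delta=\{b\in L\mid (a,b)\in\delta\}$ denotes the equivalence class of $a$. Given a lattice $(L,\preceq)$, an equivalence relation $\delta$ on $L$ is called a local congruence if (i) each equivalence class of $\delta$ is a sublattice of $L$ (closed under $\wedge$ and $\vee$ of $L$), and (ii) each equivalence class of $\delta$ is convex (if $x,y$ belong to the class and $x\preceq z\preceq y$ with $z\in L$, then $z$ belongs to the class). *)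

(* Defs.v *)
From mathcomp Require Import all_boot all_order.
Set Implicit Arguments. Unset Strict Implicit. Unset Printing Implicit Defensive.
Import Order.Theory.
Local Open Scope order_scope.

Definition is_equivalence (T : Type) (delta : T -> T -> Prop) : Prop :=
  (forall x, delta x x) /\ (forall x y, delta x y -> delta y x) /\
  (forall x y z, delta x y -> delta y z -> delta x z).

Definition eq_class (T : Type) (delta : T -> T -> Prop) (a : T) : T -> Prop :=
  fun b => delta a b.

Definition is_sublattice d (L : latticeType d) (S : L -> Prop) : Prop :=
  forall x y, S x -> S y -> S (x `&` y) /\ S (x `|` y).

Definition is_convex d (L : latticeType d) (S : L -> Prop) : Prop :=
  forall x y z, S x -> S y -> x <= z -> z <= y -> S z.

Definition local_congruence d (L : latticeType d) (delta : L -> L -> Prop) : Prop :=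
  is_equivalence delta /\
  (forall a, is_sublattice (eq_class delta a)) /\
  (forall a, is_convex (eq_class delta a)).

(* Main.v *)
Require Import Defs.
From mathcomp Require Import all_boot all_order.
Import Order.Theory.
Local Open Scope order_scope.

Theorem proposition3p4 (d : Order.disp_t) (L : latticeType d) (delta : L -> L -> Prop)
  (Hdelta : is_equivalence delta) :
  local_congruence delta <->
  (forall a b c : L,
     (delta a b -> a <= c -> c <= b -> delta a c) /\
     (delta a b <-> delta (a `&` b) (a `|` b))).
Proof.
have [Hr [Hs Ht]] := Hdelta.
split.
- move=> [_ [Hsub Hcv]] a b c; split.
  + move=> Hab Hac Hcb; exact: (Hcv a a b c (Hr a) Hab Hac Hcb).
  + split.
    * move=> Hab; have [Hm Hj] := Hsub a a b (Hr a) Hab.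
      exact: Ht (Hs _ _ Hm) Hj.
    * move=> H.
      have H1 : delta (a `&` b) a :=
        Hcv _ _ _ _ (Hr _) H (leIl a b) (leUl a b).
      have H2 : delta (a `&` b) b :=
        Hcv _ _ _ _ (Hr _) H (leIr b a) (leUr b a).
      exact: Ht (Hs _ _ H1) H2.
- move=> H; split; first by [].
  split.
  + move=> a x y Hx Hy; rewrite /eq_class in Hx Hy *.
    have Hxy : delta x y := Ht _ _ _ (Hs _ _ Hx) Hy.
    have Hmj := (proj1 (proj2 (H x y x)) Hxy).
    have Hmx : delta (x `&` y) x := proj1 (H _ _ x) Hmj (leIl x y) (leUl x y).
    split.
    * exact: Ht Hx (Hs _ _ Hmx).
    * exact: Ht Hx (Ht _ _ _ (Hs _ _ Hmx) Hmj).
  + move=> a x y z Hx Hy Hxz Hzy; rewrite /eq_class in Hx Hy *.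
    have Hxy : delta x y := Ht _ _ _ (Hs _ _ Hx) Hy.
    exact: Ht Hx (proj1 (H x y z) Hxy Hxz Hzy).
Qed.
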